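(* Consider a neutral evolutionary model on $N$ sites given by a replacement rule $p$ satisfying the fixation assumption described in the context. Let $\mathbf{a}_0=(1,2,\ldots,N)$ be the initial state of the ancestral Markov chain. Then for each site $i$, $$\rho_i=\lim_{t\to\infty}\Pr_{(\mathcal{A},\mathbf{a}_0)}\big[\mathbf{a}(t)=(i,\ldots,i)\big],$$ where $\mathbf{a}(t)$ is the state of the ancestral Markov chain at time $t$ started from $\mathbf{a}_0$.
   Context: There are $N$ sites $1,\ldots,N$. A replacement event is a pair $(R,\alpha)$ with $R\subseteq\{1,\ldots,N\}$ and $\alpha:R\to\{1,\ldots,N\}$. A replacement rule is a probability distribution $p(R,\alpha)$ on replacement events, independent of the state. For any finite alphabet $T$, the associated Markov chain on $T^N$ evolves as follows: at each time-step an event $(R,\alpha)$ is drawn with probability $p(R,\alpha)$ and the state $\mathbf{s}$ becomes $\mathbf{s}'$ with $s_i'=s_i$ if $i\notin R$ and $s_i'=s_{\alpha(i)}$ if $i\in R$. The evolutionary Markov chain $\mathcal{M}$ is this chain with alphabet $\{\mathrm{M},\mathrm{R}\}$; the ancestral Markov chain $\mathcal{A}$ is this chain with alphabet $\{1,\ldots,N\}$. Fixation assumption: there exist a site $i$ and a finite sequence of replacement events, each of positive probability, such that if these events occur consecutively (from any initial state) every site ends up carrying the symbol initially at site $i$. The site-specific fixation probability is $\rho_i=\lim_{t\to\infty}\Pr_{(\mathcal{M},\mathbf{m}_i)}[\mathbf{s}(t)=(\mathrm{M},\ldots,\mathrm{M})]$, where $\mathbf{m}_i$ is the state with M at site $i$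 and R at all other sites. *)

(* Defs.v *)
From HB Require Import structures.
From mathcomp Require Import all_boot all_order all_algebra.
From mathcomp Require Import all_classical all_reals all_analysis.
Set Implicit Arguments. Unset Strict Implicit. Unset Printing Implicit Defensive.
Import Order.TTheory GRing.Theory Num.Theory.
Import numFieldNormedType.Exports.
Local Open Scope classical_set_scope.
Local Open Scope ring_scope.

(* A replacement event (R, alpha) with R a set of sites and
   alpha : R -> sites is encoded bijectively as a finite function
   e : 'I_N -> option 'I_N, with e i = None iff i \notin R, and
   e i = Some (alpha i) iff i \in R. *)
Definition event (N : nat) := {ffun 'I_N -> option 'I_N}.

Definition in_R N (e : event N) (i : 'I_N) : bool := e i != None.

Definition state N (T : finType) := {ffun 'I_N -> T}.

Definition apply_event N (T : finType) (e : event N) (s : state N T) : state N T :=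
  [ffun i => match e i with None => s i | Some j => s j end].

Definition apply_events N (T : finType) (es : seq (event N)) (s : state N T) :=
  foldl (fun s e => apply_event e s) s es.

Definition is_rule (R : realType) N (p : event N -> R) : Prop :=
  (forall e, 0 <= p e) /\ \sum_(e : event N) p e = 1.

Definition fixation_assumption (R : realType) N (p : event N -> R) : Prop :=
  exists (i : 'I_N) (es : seq (event N)),
    all (fun e => 0 < p e) es /\
    forall (T : finType) (s : state N T),
      apply_events es s = [ffun _ => s i].

(* Law at time t of the Markov chain with alphabet T started at s0:
   dist p s0 t s = Pr[s(t) = s]. *)
Fixpoint dist (R : realType) N (T : finType) (p : event N -> R)
    (s0 : state N T) (t : nat) : state N T -> R :=
  match t with
  | 0 => fun s => if s == s0 then 1 else 0
  | t'.+1 => fun s' =>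
      \sum_(s : state N T) dist p s0 t' s *
        \sum_(e : event N | apply_event e s == s') p e
  end.

(* Evolutionary chain M: alphabet {M, R} encoded as bool, true = M (mutant),
   false = R (resident). *)
Definition mutant : bool := true.
Definition resident : bool := false.

Definition m_state N (i : 'I_N) : state N bool :=
  [ffun j => if j == i then mutant else resident].

Definition all_mutant N : state N bool := [ffun _ => mutant].

(* Ancestral chain A: alphabet 'I_N; a0 = (1,...,N) i.e. site j carries j. *)
Definition a0 N : state N 'I_N := [ffun j => j].

Definition const_state N (i : 'I_N) : state N 'I_N := [ffun _ => i].

Definition rho (R : realType) N (p : event N -> R) (i : 'I_N) : R :=
  lim ((fun t => dist p (m_state i) t (all_mutant N)) @ \oo).

(* Main.v *)
Require Import Defs.
From HB Require Import structures.
From mathcomp Require Import all_boot all_order all_algebra.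
From mathcomp Require Import all_classical all_reals all_analysis.
Import Order.TTheory GRing.Theory Num.Theory.
Import numFieldNormedType.Exports.
Local Open Scope classical_set_scope.
Local Open Scope ring_scope.

Lemma sum_fiber {R : realType} {I J : finType} (g : I -> J) (Q : pred J) (F : I -> R) :
  \sum_(j | Q j) \sum_(i | g i == j) F i = \sum_(i | Q (g i)) F i.
Proof.
rewrite (partition_big g Q) //=; apply: eq_bigr => j Qj; apply: eq_bigl => i.
by case: (eqVneq (g i) j) => [->|]; rewrite ?Qj ?andbF.
Qed.

Lemma dist_push (R : realType) N (T T' : finType) (p : event N -> R)
  (f : state N T -> state N T')
  (fcomm : forall e s, f (apply_event e s) = apply_event e (f s)) s0 t s' :
  dist p (f s0) t s' = \sum_(s | f s == s') dist p s0 t s.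
Proof.
elim: t s' => [|t IH] s' /=.
  case: (eqVneq s' (f s0)) => [->|ne].
    rewrite (bigD1 s0) //= eqxx big1 ?addr0 // => s /andP[_ /negbTE ->] //.
  rewrite big1 // => s /eqP fs; case: (eqVneq s s0) => // ess.
  by rewrite -fs ess eqxx in ne.
rewrite (eq_bigr (fun s => (\sum_(a | f a == s) dist p s0 t a) *
   \sum_(e | apply_event e s == s') p e)); last first.
  move=> s _; congr (_ * _); exact: IH.
under eq_bigr do rewrite big_distrl /=.
rewrite (eq_bigr (fun s => \sum_(a | f a == s) dist p s0 t a *
    \sum_(e | apply_event e (f a) == s') p e)); last first.
  by move=> s _; apply: eq_bigr => a /eqP ->.
rewrite (sum_fiber f xpredT (fun a => dist p s0 t a *
    \sum_(e | apply_event e (f a) == s') p e)) /=.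
rewrite exchange_big /=; apply: eq_bigr => b _; rewrite -big_distrr /=.
congr (_ * _).
rewrite (sum_fiber (fun e => apply_event e b) (fun a => f a == s') p).
by apply: eq_bigl => e; rewrite fcomm.
Qed.

Section Aux.
Variables (R : realType) (N : nat) (p : event N -> R).
Hypothesis hp : is_rule p.

Lemma dist_ge0 {T : finType} (s0 : state N T) t s : 0 <= dist p s0 t s.
Proof.
case: hp => hp0 _.
elim: t s => [|t IH] s /=; first by case: (_ == _).
apply: sumr_ge0 => a _; apply: mulr_ge0 => //; exact: sumr_ge0.
Qed.

Lemma dist_sum1 {T : finType} (s0 : state N T) t : \sum_s dist p s0 t s = 1.
Proof.
case: hp => _ hp1.
elim: t => [|t IH] /=.
  by rewrite (bigD1 s0) //= eqxx big1 ?addr0 // => s /negbTE ->.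
rewrite exchange_big /= -[RHS]IH; apply: eq_bigr => s _.
rewrite -big_distrr /= -[RHS]mulr1 -hp1; congr (_ * _).
by rewrite (sum_fiber (fun e => apply_event e s) xpredT p).
Qed.

Lemma dist_le1 {T : finType} (s0 : state N T) t s : dist p s0 t s <= 1.
Proof.
rewrite -(dist_sum1 s0 t) (bigD1 s) //= lerDl.
by apply: sumr_ge0 => *; apply: dist_ge0.
Qed.

Lemma dist_absorb {T : finType} (s0 : state N T) (A : state N T) :
  (forall e, apply_event e A = A) -> forall t, dist p s0 t A <= dist p s0 t.+1 A.
Proof.
move=> hA t /=; case: hp => hp0 hp1.
rewrite (bigD1 A) //=.
have -> : \sum_(e | apply_event e A == A) p e = 1.
  by rewrite -hp1; apply: eq_bigl => e; rewrite hA eqxx.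
rewrite mulr1 lerDl; apply: sumr_ge0 => s _; apply: mulr_ge0; first exact: dist_ge0.
exact: sumr_ge0.
Qed.
End Aux.

Theorem mainTheorem5 (R : realType) (N : nat) (p : event N -> R) :
  is_rule p -> fixation_assumption p ->
  forall i : 'I_N,
    cvg ((fun t => dist p (m_state i) t (all_mutant N)) @ \oo) /\
    ((fun t => dist p (a0 N) t (const_state i)) @ \oo --> rho p i).
Proof.
move=> hp _ i.
set fi := fun a : state N 'I_N => [ffun j => a j == i] : state N bool.
have fcomm : forall e s, fi (apply_event e s) = apply_event e (fi s).
  by move=> e s; apply/ffunP => j; rewrite !ffunE; case: (e j) => [k|]; rewrite ?ffunE.
have fa0 : fi (a0 N) = m_state i.
  by apply/ffunP => j; rewrite !ffunE /mutant /resident; case: eqP.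
have E : (fun t => dist p (a0 N) t (const_state i)) =
         (fun t => dist p (m_state i) t (all_mutant N)).
  apply: funext => t; rewrite -fa0 (@dist_push _ _ _ _ p _ fcomm).
  rewrite (eq_bigl (pred1 (const_state i))) ?big_pred1_eq // => a /=.
  apply/eqP/eqP => [h|->].
    apply/ffunP => j; have := congr1 (fun g : state N bool => g j) h; rewrite !ffunE => H; apply/eqP; by rewrite H.
  rewrite /fi /all_mutant /const_state; apply/ffunP => j; by rewrite !ffunE eqxx.
have C : cvg ((fun t => dist p (m_state i) t (all_mutant N)) @ \oo).
  apply: nondecreasing_is_cvgn.
    apply: homo_leq; [by move=> a | by move=> a b c; apply: le_trans | ].
    apply: dist_absorb => // e; apply/ffunP => j; rewrite !ffunE.
    by case: (e j) => [k|]; rewrite ?ffunE.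
  by exists 1 => _ [n _ <-]; apply: dist_le1.
split => //; rewrite E; exact: C.
Qed.
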